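(* Let $k \geq 3$ and $D \geq 1$ be integers. For each integer $n \geq 1$, let $R_{k,D}(n)$ denote the largest size of a subset $S \subseteq [n] := \{1,2,\dots,n\}$ that contains no subset of the form $\{i, i+d, i+2d, \dots, i+(k-1)d\}$ with $i \geq 1$ and $1 \leq d \leq D$. Then there exists a rational number $\alpha_{k,D}$ such that $$\lim_{n \to \infty} \frac{R_{k,D}(n)}{n} = \alpha_{k,D}.$$ *)

(* Defs.v *)
From Stdlib Require Import Reals QArith.
From mathcomp Require Import all_boot.

Set Implicit Arguments.
Unset Strict Implicit.
Unset Printing Implicit Defensive.
Local Open Scope nat_scope.

(* [n] = {1,...,n} is represented by 'I_n via x |-> x.+1. *)

Definition contains_AP (n k i d : nat) (S : {set 'I_n}) : bool :=
  [forall j : 'I_k, [exists x in S, x.+1 == i + j * d]].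

(* The start i ranges over 1..n (i.e. i : 'I_n.+1 with 1 <= i): a start
   i > n is impossible anyway since i itself must lie in S ⊆ [n]. *)
Definition AP_free (k D n : nat) (S : {set 'I_n}) : bool :=
  [forall i : 'I_n.+1, forall d : 'I_D.+1,
     ((1 <= i) && (1 <= d)) ==> ~~ contains_AP k i d S].

Definition R_kD (k D n : nat) : nat :=
  \max_(S : {set 'I_n} | AP_free k D S) #|S|.

(* Main.v *)
Require Import Defs.
From Stdlib Require Import Reals QArith ZArith Classical Lra Psatz.
From mathcomp Require Import all_boot zify.

Set Implicit Arguments.
Unset Strict Implicit.
Unset Printing Implicit Defensive.
Local Open Scope nat_scope.

Definition APF (k D : nat) (f : nat -> bool) :=
  forall a d, 0 < d -> d <= D -> ~ (forall j, j < k -> f (a + j * d)).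

Definition Lw (k D : nat) := k.-1 * D.
Definition Nw (k D : nat) := 2 ^ Lw k D.

Lemma card_count n (P : pred nat) : #|[set y : 'I_n | P (val y)]| = count P (iota 0 n).
Proof. rewrite cardE /enum_mem size_filter -val_enum_ord count_map enumT.
apply: eq_count => y. by rewrite /= inE. Qed.

Lemma jd_le k D j d : j < k -> d <= D -> j * d <= Lw k D.
Proof. move=> jk dD; apply: leq_mul => //; lia. Qed.

Lemma splice k D f s p : APF k D f ->
  (forall t, t < Lw k D -> f (s + t) = f (s + p + t)) ->
  APF k D (fun x => if x < s then f x else f (x + p)).
Proof.
move=> hf hw a d d0 dD H.
case: (leqP s a) => sa.
  apply: (hf (a + p) d d0 dD) => j jk.
  have := H j jk. rewrite ltnNge (leq_trans sa (leq_addr _ _)) /=.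
  by rewrite addnAC.
apply: (hf a d d0 dD) => j jk.
have := H j jk. case: ifP => // /negbT; rewrite -leqNgt => sx.
have hk := jd_le jk dD.
have -> : a + j * d + p = s + p + (a + j * d - s) by lia.
rewrite -hw; last by lia.
by rewrite subnKC.
Qed.

Lemma periodic k D f s p : 0 < p -> APF k D f ->
  (forall t, t < Lw k D -> f (s + t) = f (s + p + t)) ->
  APF k D (fun x => f (s + x %% p)).
Proof.
move=> p0 hf hw.
have claim : forall y, y < p + Lw k D -> f (s + y) = f (s + y %% p).
  elim/ltn_ind => y IH yl.
  case: (ltnP y p) => yp; first by rewrite modn_small.
  have -> : s + y = s + p + (y - p) by lia.
  rewrite -hw; last by lia.
  rewrite IH; [|lia|lia].
  congr (f (s + _)). by rewrite -[in RHS](subnK yp) modnDr.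
move=> a d d0 dD H.
apply: (hf (s + a %% p) d d0 dD) => j jk.
have hk := jd_le jk dD.
have := ltn_pmod a p0 => ap.
rewrite -addnA claim; last by lia.
have := H j jk. by rewrite modnDml.
Qed.
Definition valid k D p (u : nat -> bool) := 0 < p <= Nw k D /\ APF k D (fun x => u (x %% p)).

Lemma upper k D c p : 0 < p ->
  (forall p' u, valid k D p' u -> count u (iota 0 p') * p <= c * p') ->
  forall n f, APF k D f -> p * count f (iota 0 n) <= c * n + p * Nw k D.
Proof.
move=> p0 hmax.
elim/ltn_ind => n IH f hf.
case: (leqP n (Nw k D)) => nN.
  apply: leq_trans (leq_addl (c * n) _).
  rewrite leq_mul2l; apply/orP; right; apply: leq_trans (count_size _ _) _.
  by rewrite size_iota.
pose F := fun s : 'I_(Nw k D).+1 => ([ffun t : 'I_(Lw k D) => f (s + t)] : {ffun 'I_(Lw k D) -> bool}).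
have [x [y [ne exy]]] : exists x y, x != y /\ F x = F y.
  apply: NNPP => H.
  have inj : injective F.
    move=> x y e. case: (eqVneq x y) => // ne; exfalso; apply H; by exists x, y.
  have := leq_card F inj. by rewrite card_ffun card_bool !card_ord ltnn.
have e0 : forall t0, t0 < Lw k D -> f (x + t0) = f (y + t0).
  move=> t0 lt; have := congr1 (fun g : {ffun 'I_(Lw k D) -> bool} => g (Ordinal lt)) exy; by rewrite /F !ffunE.
have [s [t [st [tN hw]]]] : exists s t, s < t /\ t <= Nw k D /\
    forall t0, t0 < Lw k D -> f (s + t0) = f (t + t0).
  case: (ltngtP x y) => [xy|yx|xy].
  - exists x, y; split => //; split => //. by rewrite -ltnS.
  - exists y, x; split => //; split; first by rewrite -ltnS.
    by move=> t0 lt; rewrite e0.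
  - by move: ne; rewrite (val_inj xy) eqxx.
pose p' := t - s.
have hw' : forall t0, t0 < Lw k D -> f (s + t0) = f (s + p' + t0).
  by move=> t0 lt; rewrite /p' subnKC ?hw // ltnW.
have p'0 : 0 < p' by rewrite /p' subn_gt0.
have hv : valid k D p' (fun x => f (s + x)).
  split; first by rewrite p'0 /=; rewrite /p'; lia.
  exact: periodic p'0 hf hw'.
have hB := hmax _ _ hv.
pose g := fun x => if x < s then f x else f (x + p').
have hg : APF k D g by exact: splice hf hw'.
have hI := IH (n - p') ltac:(rewrite /p'; lia) g hg.
have ec : count f (iota 0 n) = count f (iota 0 s) + count (fun x => f (s + x)) (iota 0 p')
     + count f (iota t (n - t)).
  have -> : n = s + (p' + (n - t)) by rewrite /p'; lia.
  rewrite !iotaD !count_cat addnA add0n.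
  have -> : s + p' = t by rewrite /p'; lia.
  have -> : s + (p' + (n - t)) - t = n - t by rewrite /p'; lia.
  congr (_ + _ + _).
  by rewrite -{1}(addn0 s) iotaDl count_map.
have eg : count g (iota 0 (n - p')) = count f (iota 0 s) + count f (iota t (n - t)).
  have -> : n - p' = s + (n - t) by rewrite /p'; lia.
  rewrite iotaD count_cat add0n.
  congr (_ + _).
    apply: eq_in_count => z; rewrite mem_iota => /andP[_ zs].
    by rewrite /g zs.
  rewrite -{1}(addn0 s) iotaDl count_map.
  have -> : iota t (n - t) = map (addn t) (iota 0 (n - t)) by rewrite -iotaDl addn0.
  rewrite count_map. apply: eq_count => z /=. rewrite /g ltnNge leq_addr /=.
  congr f. rewrite /p'; lia.
have ecn : c * (n - p') + c * p' = c * n.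
  by rewrite -mulnDr subnK // /p'; lia.
rewrite ec. move: hI hB. rewrite eg. lia.
Qed.

Lemma count_per (u : nat -> bool) p q : 0 < p ->
  count (fun x => u (x %% p)) (iota 0 (q * p)) = q * count u (iota 0 p).
Proof.
move=> p0; elim: q => [|q IH]; first by rewrite mul0n.
rewrite mulSnr iotaD count_cat IH add0n mulSnr; congr (_ + _).
rewrite -{1}(addn0 (q * p)) iotaDl count_map.
apply: eq_in_count => z; rewrite mem_iota => /andP[_ zp] /=.
by rewrite modnMDl modn_small.
Qed.

Lemma lower k D p u : 0 < k -> valid k D p u ->
  forall n, count u (iota 0 p) * n <= p * R_kD k D n + p * p.
Proof.
move=> k0 [/andP[p0 _] hA] n.
pose S := [set y : 'I_n | (fun x => u (x %% p)) (val y)].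
have hS : AP_free k D S.
  apply/forallP => i; apply/forallP => d; apply/implyP => /andP[i1 d1].
  apply/negP => /forallP H.
  apply: (hA i.-1 d d1 _) => [|j jk]; first by have := ltn_ord d; rewrite ltnS.
  have /existsP[x /andP[xS /eqP xe]] := H (Ordinal jk).
  rewrite inE /= in xS xe.
  have -> : i.-1 + j * d = x by lia.
  done.
have hR : #|S| <= R_kD k D n by rewrite /R_kD; apply: (@leq_bigmax_cond _ (fun S => AP_free k D S) (fun S : {set 'I_n} => #|S|)).
have hc : #|S| = count (fun x => u (x %% p)) (iota 0 n) by rewrite card_count.
set c := count u (iota 0 p).
have cp : c <= p by rewrite /c; apply: leq_trans (count_size _ _) _; rewrite size_iota.
have hq : (n %/ p) * c <= #|S|.
  rewrite hc -count_per //.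
  rewrite -[in leqRHS](subnKC (leq_trunc_div n p)) iotaD count_cat. apply: leq_addr.
have hn := divn_eq n p.
have hr := ltn_pmod n p0.
set q := n %/ p in hq hn. set r := n %% p in hn hr.
have : c * n <= p * (q * c) + p * p.
  rewrite hn mulnDr. 
  have : c * r <= p * p by apply: leq_mul => //; apply: ltnW.
  have -> : c * (q * p) = p * (q * c) by lia.
  lia.
move=> h; apply: leq_trans h _. rewrite leq_add2r leq_mul2l; apply/orP; right.
exact: leq_trans hq hR.
Qed.

Lemma maxP (P : nat -> Prop) B : (exists m, P m) -> (forall m, P m -> m <= B) ->
  exists m, P m /\ forall m', P m' -> m' <= m.
Proof.
elim: B => [|B IH] [m0 h0] hB.
  exists m0; split => // m' /hB; have := hB _ h0; lia.
case: (classic (P B.+1)) => hP.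
  by exists B.+1; split.
apply: IH; first by exists m0.
move=> m hm; have := hB _ hm; rewrite leq_eqVlt => /orP[/eqP e|] //.
by rewrite e in hm.
Qed.

Lemma best k D : 0 < k -> exists p u, valid k D p u /\
  forall p' u', valid k D p' u' -> count u' (iota 0 p') * p <= count u (iota 0 p) * p'.
Proof.
move=> k0.
set N := Nw k D.
have N0 : 0 < N by rewrite /N /Nw expn_gt0.
pose P := fun m => exists p u, valid k D p u /\ m = count u (iota 0 p) * (N`! %/ p).
have [m [[p [u [hv ->]]] hm]] : exists m, P m /\ forall m', P m' -> m' <= m.
  apply: (maxP (B := N`!)).
    exists (count (fun _ => false) (iota 0 1) * (N`! %/ 1)), 1, (fun _ => false); split => //.
    split; first by rewrite /= N0.
    move=> a d _ _ H; by have := H 0 k0.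
  move=> m' [p [u [[/andP[p0 pN] _] ->]]].
  apply: leq_trans (_ : p * (N`! %/ p) <= _).
    rewrite leq_mul2r; apply/orP; right; apply: leq_trans (count_size _ _) _; by rewrite size_iota.
  by rewrite mulnC divnK // dvdn_fact // p0.
exists p, u; split => // p' u' hv'.
have := hm _ (ex_intro _ p' (ex_intro _ u' (conj hv' erefl))).
case: hv => /andP[p0 pN] _; case: hv' => /andP[p'0 p'N] _.
have e1 : N`! = N`! %/ p' * p' by rewrite divnK // dvdn_fact // p'0.
have e2 : N`! = N`! %/ p * p by rewrite divnK // dvdn_fact // p0.
set X := N`! %/ p' in e1 *; set Y := N`! %/ p in e2 *.
move=> h.
rewrite -(leq_pmul2r (fact_gt0 N)).
have h2 := leq_mul h (leqnn (p * p')).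
rewrite [in leqLHS]e1 [in leqRHS]e2.
move: h2; set a := count u' _; set b := count u _.
lia.
Qed.

Lemma APF_of_set k D n (S : {set 'I_n}) : 0 < k -> AP_free k D S ->
  APF k D (fun x => [exists y in S, val y == x]).
Proof.
move=> k0 hS a d d0 dD H.
have /existsP[y /andP[_ /eqP ya]] := H 0 k0.
have an : a < n by have := ltn_ord y; rewrite ya mul0n addn0.
have an' : a.+1 < n.+1 by [].
have dD' : d < D.+1 by [].
have := forallP hS (Ordinal an').
move/forallP/(_ (Ordinal dD'))/implyP => /= /(_ d0) /negP; apply.
apply/forallP => j.
have /existsP[x /andP[xS /eqP xe]] := H j (ltn_ord j).
apply/existsP; exists x; rewrite xS /= xe.
by rewrite addSn.
Qed.

Lemma upperR k D c p n : 0 < k -> 0 < p ->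
  (forall p' u, valid k D p' u -> count u (iota 0 p') * p <= c * p') ->
  p * R_kD k D n <= c * n + p * Nw k D.
Proof.
move=> k0 p0 hmax.
have : R_kD k D n <= (c * n + p * Nw k D) %/ p.
  rewrite /R_kD; apply/bigmax_leqP => S hS.
  rewrite leq_divRL // mulnC.
  have -> : #|S| = #|[set y : 'I_n | (fun x => [exists y in S, val y == x]) (val y)]|.
    apply: eq_card => y; rewrite inE; apply/idP/existsP => [yS|[z /andP[zS /eqP e]]].
      by exists y; rewrite yS eqxx.
    by rewrite -(val_inj e).
  rewrite (card_count n (fun x => [exists y in S, val y == x])).
  exact: upper p0 hmax n _ (APF_of_set k0 hS).
move=> h; apply: leq_trans (_ : p * ((c * n + p * Nw k D) %/ p) <= _).
  by rewrite leq_mul2l h orbT.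
by rewrite mulnC leq_trunc_div.
Qed.

Section RealPart.
Local Open Scope R_scope.
Lemma lim_bounds (r : nat -> nat) (c p K : nat) : (0 < p)%N ->
  (forall n, p * r n <= c * n + p * K)%N -> (forall n, c * n <= p * r n + p * K)%N ->
  Un_cv (fun n => Rdiv (INR (r n)) (INR n)) (INR c / INR p).
Proof.
move=> p0 hu hl eps he.
have [N0 hN] := INR_unbounded (INR K / eps).
exists N0.+1 => n hn.
have np : (0 < INR n) by apply: lt_0_INR; lia.
have pp : (0 < INR p) by apply: lt_0_INR; apply/ltP.
have Hu : (INR p * INR (r n) <= INR c * INR n + INR p * INR K).
  rewrite -!mult_INR -plus_INR; apply: le_INR; apply/leP; apply: hu.
have Hl : (INR c * INR n <= INR p * INR (r n) + INR p * INR K).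
  rewrite -!mult_INR -plus_INR; apply: le_INR; apply/leP; apply: hl.
have nN : (INR N0 <= INR n) by apply: le_INR; lia.
have hK : (INR K < eps * INR n).
  set t := (INR K / eps) in hN.
  have e : INR K = (t * eps) by rewrite /t; field; lra.
  rewrite e; nra.
rewrite /R_dist.
set y := (INR (r n) / INR n - INR c / INR p).
have ey : (y * (INR p * INR n) = INR p * INR (r n) - INR c * INR n).
  by rewrite /y; field; split; lra.
set z := (INR p * INR n) in ey.
have z0 : (0 < z) by rewrite /z; nra.
have hz : (INR p * INR K < eps * z) by rewrite /z; nra.
apply: Rabs_def1; nra.
Qed.
End RealPart.

Theorem mainTheorem1 (k D : nat) (hk : (3 <= k)%N) (hD : (1 <= D)%N) :
  exists alpha : Q,
    Un_cv (fun n : nat => Rdiv (INR (R_kD k D n)) (INR n)) (Q2R alpha).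
Proof.
have k0 : 0 < k by lia.
have [p [u [hv hmax]]] := best D k0.
have p0 : 0 < p by case: hv => /andP[].
set c := count u (iota 0 p) in hmax.
exists (Z.of_nat c # Pos.of_nat p)%Q.
have -> : Q2R (Z.of_nat c # Pos.of_nat p)%Q = Rdiv (INR c) (INR p).
  rewrite /Q2R /= -INR_IZR_INZ -positive_nat_Z Nat2Pos.id; last by lia.
  by rewrite -INR_IZR_INZ.
apply: (@lim_bounds _ c p (Nw k D + p) p0) => n.
  apply: leq_trans (upperR n k0 p0 hmax) _.
  by rewrite leq_add2l leq_mul2l leq_addr orbT.
apply: leq_trans (lower k0 hv n) _.
by rewrite leq_add2l leq_mul2l leq_addl orbT.
Qed.
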